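(* Let $\mathcal G\subseteq\mathcal F$ be a sub-$\sigma$-algebra and let $Z\in L_p(\Omega,\mathcal F,P)$ be such that the conditional distributionally robust functional $\mathcal R_{|\mathcal G}(Z)$ belongs to $L_p(\Omega,\mathcal F,P)$. Then $$\mathcal R(Z)\le \mathcal R\big(\mathcal R_{|\mathcal G}(Z)\big).$$
   Context: Let $(\Omega,\mathcal F,P)$ be a probability space, $p\in[1,\infty)$, $1/p+1/q=1$, and $\mathcal Z=L_p(\Omega,\mathcal F,P)$. Let $\mathfrak M$ be a nonempty set of probability measures $Q$ on $(\Omega,\mathcal F)$ with $Q\ll P$ and $dQ/dP\in L_q(\Omega,\mathcal F,P)$, and define $\mathcal R(Z)=\sup_{Q\in\mathfrak M}\mathbb E_Q[Z]$ for $Z\in\mathcal Z$ (assumed finite). Relations $X\preceq Y$ between random variables mean $X\le Y$ $P$-almost surely; essential suprema/infima are taken with respect to $P$. For a probability measure $Q$ and sub-$\sigma$-algebra $\mathcal G$, $\operatorname{ess\,inf}\mathbb E_{Q|\mathcal G}[Z]$ denotes the essential infimum (w.r.t. $P$) of the set of all versions of the conditional expectation of $Z$ given $\mathcal G$ under $Q$ (i.e., all $\mathcal G$-measurable $Y$ with $\int_B Y\,dQ=\int_B Z\,dQ$ for all $B\in\mathcal G$); it equals $-\infty$ on sets $A\in\mathcal G$ with $Q(A)=0<P(A)$. The conditional distributionally robust functional $\mathcal R_{|\mathcal G}(Z)$ is the $\mathcal G$-measurable extended-real function (unique up to $P$-null sets) such that (i) $\operatorname{ess\,inf}\mathbb E_{Q|\mathcal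 G}[Z]\preceq \mathcal R_{|\mathcal G}(Z)$ for every $Q\in\mathfrak M$, and (ii) whenever $Y$ is $\mathcal G$-measurable with $\operatorname{ess\,inf}\mathbb E_{Q|\mathcal G}[Z]\preceq Y$ for all $Q\in\mathfrak M$, then $\mathcal R_{|\mathcal G}(Z)\preceq Y$. That is, $\mathcal R_{|\mathcal G}(Z)=\operatorname{ess\,sup}_{Q\in\mathfrak M}\mathbb E_{Q|\mathcal G}[Z]$. *)

(* Defs.v *)
From HB Require Import structures.
From mathcomp Require Import all_boot all_order all_algebra.
From mathcomp Require Import all_classical all_reals all_analysis.
From mathcomp Require Import measurable_realfun.
Set Implicit Arguments.
Unset Strict Implicit.
Unset Printing Implicit Defensive.
Import Order.TTheory GRing.Theory Num.Theory.

Local Open Scope classical_set_scope.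
Local Open Scope ring_scope.
Local Open Scope ereal_scope.

Section conditional_DR.
Context {d : measure_display} {T : measurableType d} {R : realType}.

Definition is_sub_sigma_algebra (G : set (set T)) :=
  sigma_algebra setT G /\ G `<=` measurable.

Definition G_measurable (G : set (set T)) (f : T -> \bar R) :=
  forall B : set (\bar R), measurable B -> G (f @^-1` B).

Definition in_Lp (P : {measure set T -> \bar R}) (p : \bar R) (f : T -> \bar R) :=
  measurable_fun setT f /\ Lnorm P p f < +oo.

Definition admissible (P : {measure set T -> \bar R}) (p : R)
    (Q : probability T R) :=
  Q `<< P /\
  exists h : T -> R, measurable_fun setT h /\
    (forall A, measurable A -> Q A = \int[P]_(x in A) (h x)%:E) /\
    in_Lp P (hoelder_conjugate p%:E) (EFin \o h).

Definition DR (M : set (probability T R)) (Z : T -> \bar R) : \bar R :=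
  ereal_sup [set \int[Q]_x Z x | Q in M].

Definition cond_exp_version (Q : {measure set T -> \bar R})
    (G : set (set T)) (Z : T -> R) (Y : T -> R) :=
  G_measurable G (EFin \o Y) /\ Q.-integrable setT (EFin \o Y) /\
  forall B, G B -> \int[Q]_(x in B) (Y x)%:E = \int[Q]_(x in B) (Z x)%:E.

Definition is_ess_inf (P : {measure set T -> \bar R})
    (S : set (T -> \bar R)) (X : T -> \bar R) :=
  [/\ measurable_fun setT X,
      (forall Y, S Y -> {ae P, forall x, X x <= Y x}) &
      (forall W, measurable_fun setT W ->
         (forall Y, S Y -> {ae P, forall x, W x <= Y x}) ->
         {ae P, forall x, W x <= X x})].

Definition is_ess_inf_cond_exp (P : {measure set T -> \bar R})
    (Q : {measure set T -> \bar R}) (G : set (set T)) (Z : T -> R)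
    (X : T -> \bar R) :=
  is_ess_inf P [set EFin \o Y | Y in cond_exp_version Q G Z] X.

(* X = R_{|G}(Z) = ess sup_{Q in M} E_{Q|G}[Z], via properties (i), (ii) *)
Definition is_cond_DR (P : {measure set T -> \bar R})
    (M : set (probability T R)) (G : set (set T)) (Z : T -> R)
    (X : T -> \bar R) :=
  [/\ G_measurable G X,
      (forall Q, M Q -> forall E, is_ess_inf_cond_exp P Q G Z E ->
         {ae P, forall x, E x <= X x}) &
      (forall Y, G_measurable G Y ->
         (forall Q, M Q -> forall E, is_ess_inf_cond_exp P Q G Z E ->
            {ae P, forall x, E x <= Y x}) ->
         {ae P, forall x, X x <= Y x})].

End conditional_DR.

(* Main.v *)
Require Import Defs.
From HB Require Import structures.
From mathcomp Require Import all_boot all_order all_algebra.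
From mathcomp Require Import all_classical all_reals all_analysis.
From mathcomp Require Import measurable_realfun.
Import Order.TTheory GRing.Theory Num.Theory.
Local Open Scope classical_set_scope.
Local Open Scope ring_scope.
Local Open Scope ereal_scope.

Section Nsec.
Context {R : realType} {d : measure_display} {T : measurableType d}.
Variables (G : set (set T)) (HG : is_sub_sigma_algebra G).
Variables (P Q : probability T R).

Lemma maxnull : exists N, [/\ G N, Q N = 0 &
  forall B, G B -> Q B = 0 -> P (B `\` N) = 0].
Proof.
have [G0 GC GU] := HG.1.
set S := [set P B | B in [set B | G B /\ Q B = 0]].
set s := ereal_sup S.
have s0 : 0 <= s by apply: ereal_sup_ubound; exists set0; rewrite ?measure0.
have s1 : s <= 1.
  apply: ge_ereal_sup => _ [B [GB _] <-].
  by rewrite -(probability_setT P); apply: le_measure; rewrite ?inE//; apply: HG.2.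
have sfin : s \is a fin_num by rewrite ge0_fin_numE// (le_lt_trans s1)// ltey.
have /choice [Bn hBn] : forall n : nat, exists B, (G B /\ Q B = 0) /\
    s - (n.+1%:R^-1)%:E < P B.
  move=> n; have [_ [B HB <-] h] := ub_ereal_sup_adherent
    (S := S) (e := n.+1%:R^-1) ltac:(by rewrite invr_gt0) sfin.
  by exists B.
have mBn n : d.-measurable (Bn n) by apply: HG.2; case: (hBn n) => -[].
set N := \bigcup_n Bn n.
have GN : G N by apply: GU => n; case: (hBn n) => -[].
have mN : d.-measurable N by apply: HG.2.
have QN : Q N = 0.
  apply/eqP; rewrite eq_le measure_ge0 andbT.
  apply: le_trans (measure_sigma_subadditive Q mBn mN (@subset_refl _ N)) _.
  rewrite eseries0// => n _ _; by case: (hBn n) => -[].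
have PN : s <= P N.
  apply/lee_subgt0Pr => e e0.
  have [k hk] := ltr_add_invr e0; rewrite add0r in hk.
  apply: le_trans (_ : s - (k.+1%:R^-1)%:E <= _).
    by rewrite leeB// lee_fin ltW.
  apply: le_trans (ltW (hBn k).2) _.
  by apply: le_measure; rewrite ?inE//; apply: bigcup_sup.
exists N; split => // B GB QB.
have mB : d.-measurable B by apply: HG.2.
have GNB : G (N `|` B).
  rewrite -bigcup2E; apply: GU => n.
  by case: n => [|[|n]] /=.
have QNB : Q (N `|` B) = 0.
  apply/eqP; rewrite eq_le measure_ge0 andbT.
  apply: le_trans (measureU2 Q mN mB) _.
  rewrite [X in X + _](_ : _ = 0); last exact: QN.
  by rewrite [X in _ + X](_ : _ = 0) ?adde0; last exact: QB.
have PNB : P (N `|` B) <= s by apply: ereal_sup_ubound; exists (N `|` B).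
have : P (N `|` B) = P N + P (B `\` N).
  rewrite -measureU; [|by []|exact: measurableD|].
    by rewrite setDE setUIr setUCr setIT.
  by rewrite setDE setICA setICr setI0.
move=> e; apply/eqP; rewrite eq_le measure_ge0 andbT.
have PNfin : P N \is a fin_num by rewrite fin_num_measure.
rewrite -(@leeD2lE _ (P N)) // adde0 -e.
exact: le_trans PNB PN.
Qed.

End Nsec.

Section condexp.
Context {R : realType} {d : measure_display} {T : measurableType d}.
Variables (G : set (set T)) (HG : is_sub_sigma_algebra G).
Local Notation T' := (g_sigma_algebraType G).

Lemma mGE (A : set T') : measurable A = G A.
Proof. by rewrite (measurable_g_measurableTypeE HG.1). Qed.

Lemma mG_F (A : set T') : measurable A -> d.-measurable (A : set T).
Proof. by rewrite mGE; apply: HG.2. Qed.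

Lemma mid_G : measurable_fun [set: T] (fun x : T => (x : T')).
Proof. by move=> _ B mB; rewrite setTI; apply: mG_F. Qed.

Definition idG_mixin := isMeasurableFun.Build _ _ _ _ _ mid_G.
Definition idG : {mfun T >-> T'} := MeasurableFun.Pack (MeasurableFun.Class idG_mixin).

Variables (Q : probability T R) (Z : T -> R).
Hypothesis intZ : Q.-integrable setT (EFin \o Z).

Definition QG := distribution Q idG.


Definition nuG : set T' -> \bar R := fun A => \int[Q]_(x in (A : set T)) (Z x)%:E.

Let nuG0 : nuG set0 = 0. Proof. by rewrite /nuG integral_set0. Qed.
Let nuGfin A : measurable A -> nuG A \is a fin_num.
Proof. move=> mA; apply: integrable_fin_num => //; first exact: mG_F. by apply: (integrableS measurableT) => //; exact: mG_F. Qed.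
Let nuGs : semi_sigma_additive nuG.
Proof.
move=> F mF tF mUF.
have h := (@charge_semi_sigma_additive _ _ _ (induced_charge intZ) F
  (fun n => mG_F _ (mF n)) tF (mG_F _ mUF)).
exact h.
Qed.
HB.instance Definition _ := isCharge.Build _ _ _ nuG nuG0 nuGfin nuGs.

Lemma nuG_dom : nuG `<< QG.
Proof.
apply/null_content_dominatesP => A mA QA.
rewrite /nuG null_set_integral//; first exact: mG_F.
  apply: measurable_funTS; exact: (measurable_int _ intZ).
Qed.


Definition fG := Radon_Nikodym nuG QG.
Definition YG : T -> R := fun x => fine (fG x).

Lemma fG_fin x : fG x \is a fin_num.
Proof. exact: (Radon_Nikodym_fin_num _ nuG_dom). Qed.

Lemma fYG : EFin \o YG = fG.
Proof. by apply/funext => x /=; rewrite /YG fineK// fG_fin. Qed.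

Lemma intfG : QG.-integrable setT fG.
Proof. exact: (Radon_Nikodym_integrable nuG_dom). Qed.

Lemma mfG : measurable_fun [set: T'] fG.
Proof. exact: (measurable_int _ intfG). Qed.

Lemma mfG_T : measurable_fun [set: T] (fG : T -> \bar R).
Proof. exact: (measurableT_comp mfG mid_G). Qed.

Lemma intfG_T : Q.-integrable setT (fG : T -> \bar R).
Proof.
apply/integrableP; split; first exact: mfG_T.
have := integrableP _ _ _ intfG => -[_].
have -> : \int[QG]_(x in setT) `|fG x| = \int[Q]_(x in setT) `|fG x|.
  have h := @ge0_integral_pushforward _ _ T T' R _ mid_G Q setT (fun x => `|fG x|)
    measurableT (measurableT_comp (@abse_measurable R setT) mfG) (fun _ _ => abse_ge0 _).
  exact h.
done.
Qed.

Lemma cond_exp_exists : cond_exp_version Q G Z YG.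
Proof.
rewrite /cond_exp_version fYG; split; [|split].
- by move=> B mB; rewrite -mGE; have := mfG measurableT B mB; rewrite setTI.
- exact: intfG_T.
- move=> B GB.
  have mB : measurable (B : set T') by rewrite mGE.
  have h := @integral_pushforward _ _ T T' R _ mid_G Q B fG mfG
    (integrableS measurableT (mG_F _ mB) (subsetT _) intfG_T) mB.
  have h2 := Radon_Nikodym_integral nuG_dom mB.
  transitivity (\int[Q]_(x in B) fG x).
    by apply: eq_integral => x _; rewrite /YG fineK// fG_fin.
  transitivity (\int[QG]_(x in B) fG x); first by symmetry; exact h.
  by rewrite -h2.
Qed.


Lemma G_meas_T' (f : T -> \bar R) : G_measurable G f ->
  measurable_fun [set: T'] (f : T' -> \bar R).
Proof. by move=> Gf _ B mB; rewrite setTI mGE; exact: Gf. Qed.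

Lemma version_ae Y' : cond_exp_version Q G Z Y' ->
  exists C, [/\ G C, Q C = 0 & forall x, ~ C x -> Y' x = YG x].
Proof.
move=> [GY [iY eqY]].
have mY' := G_meas_T' _ GY.
have h : ae_eq QG setT fG (EFin \o Y' : T' -> \bar R).
  apply: integral_ae_eq => //; first exact: intfG.
  move=> E _ mE.
  have h2 := Radon_Nikodym_integral nuG_dom mE.
  transitivity (nuG E); first by rewrite h2.
  have h := @integral_pushforward _ _ T T' R _ mid_G Q E _ mY'
    (integrableS measurableT (mG_F _ mE) (subsetT _) iY) mE.
  rewrite /nuG -eqY; last by rewrite -mGE.
  by symmetry; exact h.
case: h => C [mC QC sub].
exists C; split => //; first by rewrite -mGE.
move=> x Cx; rewrite /YG.
have : fG x = (Y' x)%:E.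
  apply: contrapT => ne; apply: Cx; apply: sub => /=; by move/(_ I).
by move=> ->.
Qed.


Lemma T'_meas_G (f : T -> \bar R) :
  measurable_fun [set: T'] (f : T' -> \bar R) -> G_measurable G f.
Proof. by move=> mf B mB; rewrite -mGE; have := mf measurableT B mB; rewrite setTI. Qed.

Lemma mYG' : measurable_fun [set: T'] (YG : T' -> R).
Proof. by apply/measurable_EFinP; rewrite fYG; exact: mfG. Qed.

Lemma version_of_ae (Y' : T -> R) (C : set T) : G_measurable G (EFin \o Y') ->
  G C -> Q C = 0 -> (forall x, ~ C x -> Y' x = YG x) ->
  cond_exp_version Q G Z Y'.
Proof.
move=> GY GC QC eqC.
have mC : d.-measurable C by apply: HG.2.
have mY : measurable_fun [set: T] (EFin \o Y').
  exact: (measurableT_comp (G_meas_T' _ GY) mid_G).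
have mYG : measurable_fun [set: T] (EFin \o YG) by rewrite fYG; exact: mfG_T.
have ae B : ae_eq Q B (EFin \o Y') (EFin \o YG).
  exists C; split => // x /= h; apply: contrapT => Cx; apply: h => _.
  by rewrite eqC.
split => //; split.
  apply/integrableP; split => //.
  rewrite (ae_eq_integral (fun x => `|(EFin \o YG) x|)) //.
  - by have /integrableP[] := intfG_T; rewrite -fYG.
  - exact: (measurableT_comp (@abse_measurable R setT) mY).
  - exact: (measurableT_comp (@abse_measurable R setT) mYG).
  - by apply: filterS (ae setT) => x h _ /=; case: (h I) => ->.
move=> B GB.
have mB : d.-measurable B by apply: HG.2.
have [_ [_ eqYG]] := cond_exp_exists.
rewrite -eqYG // (ae_eq_integral (EFin \o YG)) //.
- exact: measurable_funTS.
- exact: measurable_funTS.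
Qed.

Variable P : probability T R.

Lemma essinf_exists : exists2 E : T -> \bar R, is_ess_inf_cond_exp P Q G Z E &
  {ae Q, forall x, E x = (YG x)%:E}.
Proof.
have [N [GN QN maxN]] := @maxnull R d T G HG P Q.
have mN : d.-measurable N by apply: HG.2.
pose E := fun x => if x \in N then -oo else (YG x)%:E.
exists E; last first.
  exists N; split => // x /= h; apply: contrapT => Nx; apply: h.
  by rewrite /E memNset.
split.
- apply: measurable_fun_ifT.
  + by apply: (measurable_fun_bool true); rewrite setTI preimage_mem_true.
  + exact: measurable_cst.
  + by have := mfG_T; rewrite -fYG.
- move=> _ [Y' vY' <-].
  have [C [GC QC eqC]] := version_ae _ vY'.
  have mC : d.-measurable C by apply: HG.2.
  exists (C `\` N); split; [exact: measurableD|exact: maxN|].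
  move=> x /= h; apply: contrapT => hCN; apply: h; rewrite /E.
  case: ifPn => [_|/negP]; first exact: leNye.
  rewrite in_setE => Nx; rewrite eqC //.
  by move=> Cx; apply: hCN.
- move=> W mW hW.
  pose Yn (n : nat) := fun x => if x \in N then (YG x - n%:R)%R else YG x.
  have vYn n : cond_exp_version Q G Z (Yn n).
    apply: (@version_of_ae _ N) => //; last first.
      by move=> x Nx; rewrite /Yn memNset.
    apply: T'_meas_G; apply/measurable_EFinP.
    apply: measurable_fun_ifT.
    + apply: (measurable_fun_bool true); rewrite setTI preimage_mem_true.
      by rewrite mGE.
    + by apply: measurable_funB => //; exact: mYG'.
    + exact: mYG'.
  have h1 := hW _ (ex_intro2 _ _ _ cond_exp_exists erefl).
  have h2 : {ae P, forall x, forall n, W x <= (Yn n x)%:E}.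
    apply: ae_foralln => n; exact: (hW _ (ex_intro2 _ _ _ (vYn n) erefl)).
  apply: filterS2 h1 h2 => x /= h1 h2; rewrite /E.
  case: ifPn => xN; last exact: h1.
  move: h2; rewrite /Yn xN => h2.
  case: (W x) h2 => [r| |] h2; last by [].
    have := h2 (Num.truncn (YG x - r)).+1.
    rewrite lee_fin lerBrDl -lerBrDr => /(lt_le_trans (truncnS_gt _)).
    by rewrite ltxx.
  by have := h2 0%N.
Qed.

End condexp.

Section mono.
Context {R : realType} {d : measure_display} {T : measurableType d}.

Lemma ae_le_int (mu : {measure set T -> \bar R}) (f g : T -> \bar R) :
  measurable_fun setT f -> measurable_fun setT g ->
  {ae mu, forall x, f x <= g x} -> \int[mu]_x f x <= \int[mu]_x g x.
Proof.
move=> mf mg h; rewrite integralE [leRHS]integralE; apply: leeB.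
- apply: ae_ge0_le_integral => //.
  + exact: measurable_funepos.
  + exact: measurable_funepos.
  + apply: filterS h => x fg _.
    apply: (@funepos_le _ _ [set x] f g); last exact/mem_set.
    by move=> y /set_mem ->.
- apply: ae_ge0_le_integral => //.
  + exact: measurable_funeneg.
  + exact: measurable_funeneg.
  + apply: filterS h => x fg _.
    apply: (@funeneg_le _ _ [set x] f g); last exact/mem_set.
    by move=> y /set_mem ->.
Qed.

Lemma Lnorm_abs_eq (mu : {measure set T -> \bar R}) (p : R) (f g : T -> \bar R) :
  (forall x, `|f x| = `|g x|) -> Lnorm mu p%:E f = Lnorm mu p%:E g.
Proof.
move=> h; rewrite unlock; congr (_ `^ _).
by apply: eq_integral => x _; rewrite h.
Qed.

End mono.

Theorem proposition3p6 (R : realType) (d : measure_display)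
  (T : measurableType d) (P : probability T R) (p : R)
  (M : set (probability T R)) (G : set (set T)) (Z : T -> R)
  (X : T -> \bar R) :
  (1 <= p)%R ->
  M !=set0 ->
  (forall Q, M Q -> admissible P p Q) ->
  (forall Y : T -> R, in_Lp P p%:E (EFin \o Y) ->
     DR M (EFin \o Y) \is a fin_num) ->
  is_sub_sigma_algebra G ->
  in_Lp P p%:E (EFin \o Z) ->
  is_cond_DR P M G Z X ->
  in_Lp P p%:E X ->
  DR M (EFin \o Z) <= DR M X.
Proof.
move=> p1 _ adm hDR HG [mZ LZ] [GX hX1 hX2] [mX LX].
have intZ : forall Q, M Q -> Q.-integrable setT (EFin \o Z).
  move=> Q MQ.
  have mZ' : measurable_fun setT Z by apply/measurable_EFinP.
  have hL : in_Lp P p%:E (EFin \o (fun x => `|Z x|%R)).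
    split.
      by apply/measurable_EFinP; exact: measurableT_comp (@normr_measurable R setT) mZ'.
    by rewrite (@Lnorm_abs_eq _ _ _ _ _ _ (EFin \o Z)) // => x /=; rewrite normr_id.
  have := hDR _ hL => fin.
  apply/integrableP; split => //.
  apply: le_lt_trans (_ : DR M (EFin \o (fun x => `|Z x|%R)) < +oo); last first.
    by move: fin; rewrite fin_numE ltey => /andP[].
  by apply: ereal_sup_ubound; exists Q.
have HQ : forall Q, M Q -> \int[Q]_x (Z x)%:E <= \int[Q]_x X x.
  move=> Q MQ.
  have [E hE EY] := essinf_exists _ HG _ _ (intZ Q MQ) P.
  have EX := hX1 Q MQ E hE.
  have EXQ : {ae Q, forall x, E x <= X x}.
    case: EX => N0 [mN0 PN0 sub]; exists N0; split => //.
    have [QP _] := adm Q MQ.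
    have PN0' : P.-null_set N0 by apply/(measure0_null_setP P mN0).
    have := QP N0 PN0'.
    by move/(measure0_null_setP Q mN0).
  have [_ [_ eqY]] := cond_exp_exists _ HG _ _ (intZ Q MQ).
  have GT : G setT by have [G0 GC _] := HG.1; have := GC set0 G0; rewrite setD0.
  rewrite -eqY //.
  apply: ae_le_int => //.
  - have := mfG_T _ HG _ _ (intZ Q MQ); rewrite -fYG; exact.

  - apply: filterS2 EY EXQ => x <- //.
apply: ge_ereal_sup => _ [Q MQ <-].
apply: le_trans (HQ Q MQ) _.
by apply: ereal_sup_ubound; exists Q.
Qed.
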